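(* Let $\mu$ be a critical offspring distribution, let $X_1,X_2,\dots$ be i.i.d. with $\mathbf P(X_1=k)=\mu_{k+1}$ for $k\ge-1$, and $S_m=X_1+\dots+X_m$ ($S_0=0$). For every $\varepsilon>0$ there exists $\delta>0$ such that for all sufficiently large $n$ with $\mathbf P(S_n=-1)>0$, \[ \mathbf P\Big(\max_{0\le m\le n}|S_m|\ge\varepsilon n\ \Big|\ S_n=-1\Big)\le e^{-\delta n}. \]
   Context: An offspring distribution is a probability measure $\mu=(\mu_k)_{k\ge0}$ on $\mathbb Z_+$; it is critical if $\sum_kk\mu_k=1$. *)

(* Defs.v *)
From HB Require Import structures.
From mathcomp Require Import all_boot all_order all_algebra.
From mathcomp Require Import all_classical all_reals all_analysis.
Set Implicit Arguments. Unset Strict Implicit. Unset Printing Implicit Defensive.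
Import Order.TTheory GRing.Theory Num.Theory.
Import numFieldNormedType.Exports.
Local Open Scope classical_set_scope.
Local Open Scope ring_scope.

(* Steps X_i = xi_i - 1 with xi_i i.i.d. of law mu.  On the event S_n = -1
   one has xi_1 + ... + xi_n = n - 1, hence each xi_i <= n - 1, so the whole
   event lives in the finite set of n-tuples with entries in 'I_n. *)

Definition offspring_dist (R : realType) (mu : nat -> R) : Prop :=
  (forall k, 0 <= mu k) /\ series mu @ \oo --> (1 : R).

Definition critical (R : realType) (mu : nat -> R) : Prop :=
  series (fun k => k%:R * mu k) @ \oo --> (1 : R).

Definition walkS (R : realType) (n : nat) (x : n.-tuple 'I_n) (m : nat) : R :=
  \sum_(i < n | (i < m)%N) ((tnth x i)%:R - 1).

(* P( S_n = -1 and E ), where E is an event about (xi_1,...,xi_n) *)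
Definition probSn_neg1 (R : realType) (mu : nat -> R) (n : nat)
    (E : pred (n.-tuple 'I_n)) : R :=
  \sum_(x : n.-tuple 'I_n | ((\sum_(i < n) (tnth x i : nat)).+1 == n) && E x)
     \prod_(i < n) mu (tnth x i).

Definition bigmax_event (R : realType) (n : nat) (eps : R) : pred (n.-tuple 'I_n) :=
  fun x => [exists m : 'I_n.+1, eps * n%:R <= `| walkS R x m |].

Arguments probSn_neg1 {R} mu n E.
Arguments bigmax_event {R} n eps.

(* Main.v *)
Require Import Defs.
From HB Require Import structures.
From mathcomp Require Import all_boot all_order all_algebra.
From mathcomp Require Import all_classical all_reals all_analysis.
From mathcomp Require Import ring lra zify.
Import Order.TTheory GRing.Theory Num.Theory.
Import numFieldNormedType.Exports.
Local Open Scope ring_scope.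
Set Implicit Arguments. Unset Strict Implicit. Unset Printing Implicit Defensive.
Section Gen.
Variable R : realType.

Lemma sum_tuple_prod (p q : nat) (F : 'I_p -> 'I_q -> R) :
  \sum_(x : p.-tuple 'I_q) \prod_(i < p) F i (tnth x i) =
  \prod_(i < p) \sum_(k < q) F i k.
Proof.
rewrite bigA_distr_bigA /=.
rewrite (reindex (@tuple_of_finfun _ p)) /=; last first.
  by exists (@finfun_of_tuple _ p) => x _; [rewrite tuple_of_finfunK|rewrite finfun_of_tupleK].
apply: eq_bigr => f _; apply: eq_bigr => i _.
by rewrite /tuple_of_finfun tnth_mktuple.
Qed.

Lemma series_le_lim (u : nat -> R) : (forall k, 0 <= u k) ->
  (series u @ \oo --> (1:R))%classic -> forall n, series u n <= 1.
Proof.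
move=> u0 h n.
have hnd : nondecreasing_seq (series u).
  by apply/nondecreasing_seqP => k; rewrite /series /= big_nat_recr //= lerDl.
have := nondecreasing_cvgn_le hnd (cvgP _ h) n.
by rewrite (cvg_lim _ h).
Qed.

Lemma series_ev (u : nat -> R) : (series u @ \oo --> (1:R))%classic ->
  forall e, 0 < e -> exists N, forall n, (N <= n)%N -> 1 - e <= series u n.
Proof.
move/cvgrPdist_le => h e he; have [N _ HN] := h e he.
exists N => n /HN; rewrite ler_distlC => /andP[+ _] //.
Qed.

End Gen.

Section Mu.
Variables (R : realType) (mu : nat -> R).
Hypothesis hmu : offspring_dist mu.
Hypothesis hcrit : critical mu.

Lemma mu_ge0 k : 0 <= mu k. Proof. exact: hmu.1 k. Qed.

Definition ps n := \sum_(0 <= k < n) mu k.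
Definition pm n := \sum_(0 <= k < n) k%:R * mu k.

Lemma ps_le1 n : ps n <= 1.
Proof. by have := series_le_lim mu_ge0 hmu.2 n; rewrite /series. Qed.

Lemma pm_le1 n : pm n <= 1.
Proof.
have := series_le_lim _ hcrit n; rewrite /series /=; apply => k.
by rewrite mulr_ge0 ?mu_ge0.
Qed.

Lemma ps_ev e : 0 < e -> exists N, forall n, (N <= n)%N -> 1 - e <= ps n.
Proof. by move=> he; have [N HN] := series_ev hmu.2 he; exists N => n /HN; rewrite /series. Qed.

Lemma pm_ev e : 0 < e -> exists N, forall n, (N <= n)%N -> 1 - e <= pm n.
Proof. by move=> he; have [N HN] := series_ev hcrit he; exists N => n /HN; rewrite /series. Qed.

Lemma ps_ge0 n : 0 <= ps n.
Proof. by apply: sumr_ge0 => k _; exact: mu_ge0. Qed.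

Lemma pm_split m n : (m <= n)%N -> pm n = pm m + \sum_(m <= k < n) k%:R * mu k.
Proof. by move=> hmn; rewrite /pm (big_cat_nat (leq0n m) hmn). Qed.

Lemma ps_split m n : (m <= n)%N -> ps n = ps m + \sum_(m <= k < n) mu k.
Proof. by move=> hmn; rewrite /ps (big_cat_nat (leq0n m) hmn). Qed.

Lemma pm_mono m n : (m <= n)%N -> pm m <= pm n.
Proof.
move=> hmn; rewrite (pm_split hmn) lerDl; apply: sumr_ge0 => k _.
by rewrite mulr_ge0 ?mu_ge0.
Qed.

Lemma mu_le1 k : mu k <= 1.
Proof.
apply: le_trans (ps_le1 k.+1); rewrite (ps_split (leqnSn k)) big_nat1 lerDr.
exact: ps_ge0.
Qed.

End Mu.

Section Mu2.
Variables (R : realType) (mu : nat -> R).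
Hypothesis hmu : offspring_dist mu.
Hypothesis hcrit : critical mu.

Lemma tail_mass n : n%:R * (1 - ps mu n) <= 1 - pm mu n.
Proof.
apply/ler_addgt0Pr => e he.
have hn1 : 0 < n.+1%:R :> R by rewrite ltr0n.
have [N HN] := ps_ev hmu (divr_gt0 he hn1).
pose L := maxn N n.
have hL : (n <= L)%N by rewrite leq_maxr.
have h1 : n%:R * (ps mu L - ps mu n) <= pm mu L - pm mu n.
  rewrite (ps_split _ hL) (pm_split _ hL) [ps mu n + _]addrC addrK [pm mu n + _]addrC addrK.
  rewrite mulr_sumr.
  apply: ler_sum_nat => k /andP[hk _]; by rewrite ler_wpM2r ?(mu_ge0 hmu) // ler_nat.
have h2 := HN L (leq_maxl _ _).
have h3 := pm_le1 hmu hcrit L.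
have h4 : n%:R * (1 - ps mu L) <= e.
  have h5 : 1 - ps mu L <= e / n.+1%:R by rewrite lerBlDr addrC -lerBlDr.
  apply: le_trans (_ : n.+1%:R * (e / n.+1%:R) <= e).
    apply: ler_pM; rewrite ?ler_nat // ?ler0n //.
    by rewrite subr_ge0 (ps_le1 hmu).
  by rewrite mulrC divfK // gt_eqF.
have -> : n%:R * (1 - ps mu n) = n%:R * (ps mu L - ps mu n) + n%:R * (1 - ps mu L).
  by ring.
have -> : 1 - pm mu n + e = (pm mu L - pm mu n) + (e + (1 - pm mu L)).
  by ring.
apply: lerD => //; apply: le_trans h4 _; rewrite lerDl subr_ge0 //.
Qed.
End Mu2.

Section Gen2.
Variable R : realType.

Lemma chernoff_prod (p q : nat) (B : pred 'I_p) (w h : 'I_q -> R) (U : R) :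
  (forall k, 0 <= w k) -> (forall k, 0 <= h k) ->
  \sum_k w k <= U -> \sum_k w k * h k <= U ->
  \sum_(x : p.-tuple 'I_q) (\prod_(i < p) w (tnth x i)) * \prod_(i < p | B i) h (tnth x i)
    <= U ^+ p.
Proof.
move=> w0 h0 hU1 hU2.
have -> : \sum_(x : p.-tuple 'I_q) (\prod_(i < p) w (tnth x i)) * \prod_(i < p | B i) h (tnth x i)
   = \sum_(x : p.-tuple 'I_q) \prod_(i < p) (w (tnth x i) * (if B i then h (tnth x i) else 1)).
  by apply: eq_bigr => x _; rewrite big_split /= [X in _ * X]big_mkcond.
rewrite (sum_tuple_prod (fun i k => w k * (if B i then h k else 1))).
have -> : U ^+ p = \prod_(i < p) U by rewrite prodr_const card_ord.
apply: ler_prod => i _; apply/andP; split.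
  by apply: sumr_ge0 => k _; case: (B i); rewrite ?mulr1 ?mulr_ge0.
by case: (B i); under eq_bigr do rewrite ?mulr1.
Qed.

Lemma second_moment (p q : nat) (w g : 'I_q -> R) :
  (forall k, 0 <= w k) -> \sum_k w k <= 1 ->
  \sum_(x : p.-tuple 'I_q) (\prod_(i < p) w (tnth x i)) * (\sum_(i < p) g (tnth x i)) ^+ 2
    <= p%:R * (\sum_k w k * g k ^+ 2) + (p%:R) ^+ 2 * (\sum_k w k * g k) ^+ 2.
Proof.
move=> w0 hw1.
set A := \sum_k w k.
set Bs := \sum_k w k * g k ^+ 2.
set Cs := \sum_k w k * g k.
have A0 : 0 <= A by apply: sumr_ge0.
have B0 : 0 <= Bs by apply: sumr_ge0 => k _; rewrite mulr_ge0 ?sqr_ge0.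
pose F (i j : 'I_p) (l : 'I_p) (k : 'I_q) :=
  w k * ((if l == i then g k else 1) * (if l == j then g k else 1)).
have key : forall i j, \sum_(x : p.-tuple 'I_q) (\prod_(l < p) w (tnth x l)) *
     (g (tnth x i) * g (tnth x j)) <= (if i == j then Bs else 0) + Cs ^+ 2.
  move=> i j.
  have -> : \sum_(x : p.-tuple 'I_q) (\prod_(l < p) w (tnth x l)) * (g (tnth x i) * g (tnth x j))
     = \sum_(x : p.-tuple 'I_q) \prod_(l < p) F i j l (tnth x l).
    apply: eq_bigr => x _; rewrite /F big_split /= big_split /=.
    congr (_ * (_ * _)).
      by rewrite -big_mkcond /= big_pred1_eq.
    by rewrite -big_mkcond /= big_pred1_eq.
  rewrite (sum_tuple_prod (F i j)) (bigD1 i) //=.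
  have hF : forall l, 0 <= \sum_k F i j l k -> True by [].
  case: eqP => [<-|hij].
    have -> : \sum_k F i i i k = Bs.
      by apply: eq_bigr => k _; rewrite /F eqxx expr2.
    apply: le_trans (_ : Bs <= Bs + Cs ^+ 2); last by rewrite lerDl sqr_ge0.
    apply: ler_piMr => //; apply: prodr_ile1 => l hl; apply/andP; split.
      by apply: sumr_ge0 => k _; rewrite /F (negbTE hl) !mulr1.
    rewrite (eq_bigr (fun k => w k)) //; last by move=> k _; rewrite /F (negbTE hl) !mulr1.
  rewrite add0r (bigD1 j) /=; last by apply/eqP => h; apply: hij; rewrite h.
  have -> : \sum_k F i j i k = Cs.
    apply: eq_bigr => k _; rewrite /F eqxx; case: eqP => h; [by case: hij | by rewrite mulr1].
  have -> : \sum_k F i j j k = Cs.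
    apply: eq_bigr => k _; rewrite /F eqxx; case: eqP => h; last by rewrite mul1r.
    by case: hij; rewrite h.
  rewrite mulrA -expr2; apply: ler_piMr; first exact: sqr_ge0.
  apply: prodr_ile1 => l /andP[hl1 hl2]; apply/andP; split.
    by apply: sumr_ge0 => k _; rewrite /F (negbTE hl1) (negbTE hl2) !mulr1.
  rewrite (eq_bigr (fun k => w k)) //; last by move=> k _; rewrite /F (negbTE hl1) (negbTE hl2) !mulr1.
have -> : \sum_(x : p.-tuple 'I_q) (\prod_(i < p) w (tnth x i)) * (\sum_(i < p) g (tnth x i)) ^+ 2
   = \sum_(i < p) \sum_(j < p) \sum_(x : p.-tuple 'I_q)
       (\prod_(l < p) w (tnth x l)) * (g (tnth x i) * g (tnth x j)).
  transitivity (\sum_(x : p.-tuple 'I_q) \sum_(i < p) \sum_(j < p)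
       (\prod_(l < p) w (tnth x l)) * (g (tnth x i) * g (tnth x j))).
    apply: eq_bigr => x _; rewrite expr2 mulr_suml mulr_sumr; apply: eq_bigr => i _.
    by rewrite mulr_sumr mulr_sumr.
  by rewrite exchange_big; apply: eq_bigr => i _; rewrite exchange_big.
apply: le_trans (_ : \sum_(i < p) \sum_(j < p) ((if i == j then Bs else 0) + Cs ^+ 2) <= _).
  by apply: ler_sum => i _; apply: ler_sum => j _; apply: key.
rewrite le_eqVlt; apply/orP; left; apply/eqP.
have hs : forall i : 'I_p, \sum_(j < p) (if i == j then Bs else 0) = Bs.
  by move=> i; rewrite -big_mkcond /= (big_pred1 i) // => j; rewrite /= eq_sym.
under eq_bigr do rewrite big_split /= hs sumr_const card_ord.
rewrite big_split /= !sumr_const card_ord.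
ring.
Qed.

End Gen2.

Section MGF.
Variable R : realType.

Lemma expR_small (th : R) : 0 <= th -> th <= 1/2 -> expR th <= 1 + th + 2 * th ^+ 2.
Proof.
move=> h0 h1.
have hp : 0 < 1 - th by lra.
have e1 : expR th * (1 - th) <= 1.
  have : expR th * (1 - th) <= expR th * expR (- th).
    by rewrite ler_pM2l ?expR_gt0 // expR_ge1Dx.
  by rewrite -expRD subrr expR0.
rewrite -(ler_pM2r hp); apply: le_trans e1 _.
have : 0 <= th ^+ 2 * (1 - 2 * th) by rewrite mulr_ge0 ?sqr_ge0 //; lra.
move=> h; rewrite -subr_ge0; apply: le_trans h _; rewrite le_eqVlt; apply/orP; left.
apply/eqP; ring.
Qed.

Lemma expR_negsq (t : R) : 0 <= t -> expR (- t) <= 1 - t + t ^+ 2.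
Proof.
move=> t0.
have hp : 0 < 1 + t by lra.
rewrite -(ler_pM2r hp).
have e1 : expR (- t) * (1 + t) <= 1.
  have : expR (- t) * (1 + t) <= expR (- t) * expR t by rewrite ler_pM2l ?expR_gt0 // expR_ge1Dx.
  by rewrite -expRD addNr expR0.
apply: le_trans e1 _.
have : 0 <= t ^+ 3 by rewrite exprn_ge0.
move=> h; rewrite -subr_ge0; apply: le_trans h _; rewrite le_eqVlt; apply/orP; left.
apply/eqP; ring.
Qed.

Lemma expR_neg_le1 (t : R) : 0 <= t -> expR (- t) <= 1.
Proof. by move=> t0; rewrite -expR0 ler_expR lerNl oppr0. Qed.

Lemma pointwise_small (th : R) (L k : nat) : 0 <= th -> th <= 1/2 -> (k <= L)%N ->
  expR (- (th * (k%:R - 1))) <= 1 - th * (k%:R - 1) + (2 * th ^+ 2 + th ^+ 2 * L%:R * k%:R).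
Proof.
move=> h0 h1 hk; case: k hk => [|k] hk.
  have -> : th * ((0%N)%:R - 1) = - th by rewrite mulrBr mulr0 mulr1 sub0r.
  rewrite opprK.
  by apply: le_trans (expR_small h0 h1) _; rewrite le_eqVlt; apply/orP; left; apply/eqP; ring.
have hk1 : (k.+1%:R - 1 : R) = k%:R by rewrite -natr1 addrK.
rewrite hk1.
apply: le_trans (expR_negsq (mulr_ge0 h0 (ler0n _ k))) _.
rewrite lerD2l.
have hkL : (k%:R : R) <= L%:R by rewrite ler_nat; apply: ltnW.
have hkk : (k%:R : R) <= k.+1%:R by rewrite ler_nat.
have hk0 : (0 : R) <= k%:R by [].
have : (th * k%:R) ^+ 2 <= th ^+ 2 * L%:R * k.+1%:R.
  rewrite exprMn -mulrA ler_wpM2l ?sqr_ge0 // expr2.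
  apply: ler_pM => //.
move=> h; apply: le_trans h _; rewrite lerDr mulr_ge0 ?sqr_ge0 //.
Qed.

End MGF.

Section Mu3.
Variables (R : realType) (mu : nat -> R).
Hypothesis hmu : offspring_dist mu.
Hypothesis hcrit : critical mu.

Lemma mgf_bound (eta : R) : 0 < eta -> exists th : R, [/\ 0 < th, th <= 1/2 &
   exists N1, forall n, (N1 <= n)%N ->
   \sum_(k < n) mu k * expR (- (th * (k%:R - 1))) <= 1 + th * eta].
Proof.
move=> he.
have he3 : 0 < eta / 3 by rewrite divr_gt0.
have [L HL] := pm_ev hcrit he3.
have hL2 : 0 < L%:R + 2 :> R by rewrite ltr_wpDl.
pose th := Num.min (1/2) (eta / (3 * (L%:R + 2))).
have th0 : 0 < th by rewrite lt_min; apply/andP; split; [lra | rewrite divr_gt0 // mulr_gt0].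
have th1 : th <= 1/2 by rewrite ge_min lexx.
have th2 : th * (L%:R + 2) <= eta / 3.
  have : th <= eta / (3 * (L%:R + 2)) by rewrite ge_min lexx orbT.
  rewrite ler_pdivlMr ?mulr_gt0 // => h.
  rewrite ler_pdivlMr //; apply: le_trans h; rewrite le_eqVlt; apply/orP; left; apply/eqP; ring.
exists th; split => //; exists L.+1 => n hn.
rewrite -(big_mkord xpredT (fun k => mu k * expR (- (th * (k%:R - 1))))).
pose e k := if (k <= L)%N then 2 * th ^+ 2 + th ^+ 2 * L%:R * k%:R else th * k%:R.
apply: le_trans (_ : \sum_(0 <= k < n) (mu k * (1 - th * (k%:R - 1)) + mu k * e k) <= _).
  apply: ler_sum_nat => k _; rewrite -mulrDr ler_wpM2l ?(mu_ge0 hmu) // /e.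
  case: leqP => hk; first by apply: pointwise_small => //; apply: ltW.
  apply: le_trans (expR_neg_le1 _) _.
    by rewrite mulr_ge0 ?subr_ge0 ?ler1n //; [apply: ltW | apply: leq_trans hk].
  have -> : 1 - th * (k%:R - 1) + th * k%:R = 1 + th by ring.
  by rewrite lerDl; apply: ltW.
rewrite big_split /=.
have -> : \sum_(0 <= k < n) mu k * (1 - th * (k%:R - 1)) = (1 + th) * ps mu n - th * pm mu n.
  rewrite /ps /pm mulr_sumr mulr_sumr -sumrB; apply: eq_bigr => k _; ring.
rewrite (big_cat_nat (leq0n L.+1) hn) /=.
have -> : \sum_(0 <= k < L.+1) mu k * e k = 2 * th ^+ 2 * ps mu L.+1 + th ^+ 2 * L%:R * pm mu L.+1.
  rewrite /ps /pm !mulr_sumr -big_split /=; apply: eq_big_nat => k /andP[_ hk].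
  by rewrite /e -ltnS hk; ring.
have -> : \sum_(L.+1 <= k < n) mu k * e k = th * (pm mu n - pm mu L.+1).
  rewrite (pm_split _ hn) [pm mu L.+1 + _]addrC addrK mulr_sumr; apply: eq_big_nat => k /andP[hk _].
  by rewrite /e leqNgt hk /=; ring.
have a1 := ps_le1 hmu n.
have a2 := ps_le1 hmu L.+1.
have a3 := pm_le1 hmu hcrit L.+1.
have a4 := HL n (ltnW hn).
have a5 := HL L.+1 (leqnSn L).
have a6 : 0 <= ps mu L.+1 := ps_ge0 hmu _.
have a7 : 0 <= pm mu L.+1.
  by rewrite /pm; apply: sumr_ge0 => k _; rewrite mulr_ge0 ?(mu_ge0 hmu).
have b1 : (1 + th) * ps mu n <= 1 + th by rewrite -[X in _ <= X]mulr1 ler_wpM2l //; lra.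
have b2 : th * (1 - eta / 3) <= th * pm mu L.+1 by rewrite ler_wpM2l //; lra.
have b3 : 2 * ps mu L.+1 + L%:R * pm mu L.+1 <= L%:R + 2.
  have : L%:R * pm mu L.+1 <= L%:R by rewrite -[X in _ <= X]mulr1 ler_wpM2l.
  lra.
have b4 : th ^+ 2 * (2 * ps mu L.+1 + L%:R * pm mu L.+1) <= th * (eta / 3).
  rewrite expr2 -mulrA; apply: ler_wpM2l; first lra.
  apply: le_trans th2; apply: ler_wpM2l; lra.
have -> : (1 + th) * ps mu n - th * pm mu n +
  (2 * th ^+ 2 * ps mu L.+1 + th ^+ 2 * L%:R * pm mu L.+1 + th * (pm mu n - pm mu L.+1))
  = (1 + th) * ps mu n - th * pm mu L.+1 + th ^+ 2 * (2 * ps mu L.+1 + L%:R * pm mu L.+1).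
  by ring.
have -> : 1 + th * eta = (1 + th) - th * (1 - eta / 3) + th * (eta / 3) + th * (eta / 3).
  by field.
have : 0 <= th * (eta / 3) by rewrite mulr_ge0 //; lra.
lra.
Qed.

End Mu3.

Section Num.
Variables (R : realType) (mu : nat -> R).
Hypothesis hmu : offspring_dist mu.

Definition blk (n : nat) (th a : R) (B : pred 'I_n) (x : n.-tuple 'I_n) : R :=
  expR (- (th * a)) * \prod_(i < n | B i) expR (- (th * ((tnth x i : nat)%:R - 1))).

Lemma blk_ge0 n th a B (x : n.-tuple 'I_n) : 0 <= blk th a B x.
Proof. by rewrite /blk mulr_ge0 ?expR_ge0 // prodr_ge0 // => i _; rewrite expR_ge0. Qed.

Lemma blk_ge1 n th a B (x : n.-tuple 'I_n) : 0 <= th ->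
  \sum_(i < n | B i) ((tnth x i : nat)%:R - 1) <= - a -> 1 <= blk th a B x.
Proof.
move=> th0 h; rewrite /blk -expR_sum -expRD.
set y := (X in expR X).
have hy : 0 <= y.
  rewrite /y sumrN -opprD oppr_ge0 -mulr_sumr -mulrDr mulr_ge0_le0 //.
  by rewrite addrC -lerBrDr sub0r.
by apply: le_trans (expR_ge1Dx y); rewrite lerDl.
Qed.

Lemma sum_all_steps n (x : n.-tuple 'I_n) : (\sum_(i < n) (tnth x i : nat)).+1 == n ->
  \sum_(i < n) ((tnth x i : nat)%:R - 1) = -1 :> R.
Proof.
move=> /eqP h; rewrite sumrB -natr_sum sumr_const card_ord.
have -> : (1 *+ n : R) = (\sum_(i < n) (tnth x i : nat))%:R + 1 by rewrite natr1 h.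
by rewrite opprD addrA subrr sub0r.
Qed.

Lemma num_pointwise n (eps th : R) (x : n.-tuple 'I_n) : 0 <= th ->
  ((\sum_(i < n) (tnth x i : nat)).+1 == n) && bigmax_event n eps x ->
  exists m : 'I_n.+1,
    1 <= blk th (eps * n%:R) (fun i : 'I_n => (i < m)%N) x \/
    1 <= blk th (eps * n%:R) (fun i : 'I_n => ~~ (i < m)%N) x.
Proof.
move=> th0 /andP[hs /existsP[m hm]]; exists m.
have hall := sum_all_steps hs.
rewrite (bigID (fun i : 'I_n => (i < m)%N)) /= in hall.
move: hm; rewrite /walkS.
set S1 := \sum_(i < n | (i < m)%N) _ .
set S2 := \sum_(i < n | ~~ (i < m)%N) _ in hall.
case: (lerP 0 S1) => hS1.
  rewrite ger0_norm // => hm; right; apply: blk_ge1 => //.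
  have -> : \sum_(i < n | ~~ (i < m)%N) ((tnth x i : nat)%:R - 1) = -1 - S1 :> R.
    by rewrite -[X in X - S1]hall addrC addrK.
  lra.
rewrite ltr0_norm // => hm; left; apply: blk_ge1 => //.
change (S1 <= - (eps * n%:R)); lra.
Qed.

End Num.

Section Num2.
Variables (R : realType) (mu : nat -> R).
Hypothesis hmu : offspring_dist mu.

Lemma blk_sum n (th a U : R) (B : pred 'I_n) : 1 <= U ->
  \sum_(k < n) mu k * expR (- (th * (k%:R - 1))) <= U ->
  \sum_(x : n.-tuple 'I_n) (\prod_(i < n) mu (tnth x i)) * blk th a B x
    <= expR (- (th * a)) * U ^+ n.
Proof.
move=> U1 hU.
under eq_bigr do rewrite /blk mulrCA.
rewrite -mulr_sumr ler_wpM2l ?expR_ge0 //.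
apply: (@chernoff_prod _ n n B (fun k : 'I_n => mu k)
   (fun k : 'I_n => expR (- (th * ((k : nat)%:R - 1))))) => //.
- move=> k; have := mu_ge0 hmu k; exact.
- apply: le_trans U1; have := ps_le1 hmu n; by rewrite /ps big_mkord.
Qed.

Lemma num_bound n (eps th U : R) : 0 <= th -> 1 <= U ->
  \sum_(k < n) mu k * expR (- (th * (k%:R - 1))) <= U ->
  probSn_neg1 mu n (bigmax_event n eps) <= 2 * n.+1%:R * expR (- (th * (eps * n%:R))) * U ^+ n.
Proof.
move=> th0 U1 hU; rewrite /probSn_neg1.
set a := eps * n%:R.
pose T (x : n.-tuple 'I_n) (m : 'I_n.+1) :=
  (\prod_(i < n) mu (tnth x i)) * blk th a (fun i : 'I_n => (i < m)%N) x +
  (\prod_(i < n) mu (tnth x i)) * blk th a (fun i : 'I_n => ~~ (i < m)%N) x.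
have W0 : forall x : n.-tuple 'I_n, 0 <= \prod_(i < n) mu (tnth x i).
  by move=> x; apply: prodr_ge0 => i _; exact: (mu_ge0 hmu _).
have T0 : forall x m, 0 <= T x m.
  by move=> x m; rewrite /T addr_ge0 // mulr_ge0 ?blk_ge0 ?W0.
apply: le_trans (_ : \sum_(x : n.-tuple 'I_n) \sum_(m : 'I_n.+1) T x m <= _).
  apply: le_trans (_ : \sum_(x : n.-tuple 'I_n | ((\sum_(i < n) (tnth x i : nat)).+1 == n) &&
       bigmax_event n eps x) \sum_(m : 'I_n.+1) T x m <= _).
    apply: ler_sum => x hx.
    have [m hm] := num_pointwise th0 hx.
    rewrite (bigD1 m) //=; apply: le_trans (_ : T x m <= _); last first.
      by rewrite lerDl sumr_ge0.
    rewrite /T; case: hm => hm.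
      apply: le_trans (_ : \prod_(i < n) mu (tnth x i) * blk th a (fun i : 'I_n => (i < m)%N) x <= _).
        by rewrite -[X in X <= _]mulr1 ler_wpM2l ?W0.
      by rewrite lerDl mulr_ge0 ?blk_ge0.
    apply: le_trans (_ : \prod_(i < n) mu (tnth x i) * blk th a (fun i : 'I_n => ~~ (i < m)%N) x <= _).
      by rewrite -[X in X <= _]mulr1 ler_wpM2l ?W0.
    by rewrite lerDr mulr_ge0 ?blk_ge0.
  rewrite [X in _ <= X](bigID (fun x : n.-tuple 'I_n => ((\sum_(i < n) (tnth x i : nat)).+1 == n) &&
       bigmax_event n eps x)) /= lerDl.
  by apply: sumr_ge0 => x _; apply: sumr_ge0 => m _.
rewrite exchange_big /=.
apply: le_trans (_ : \sum_(m : 'I_n.+1) (2 * (expR (- (th * a)) * U ^+ n)) <= _).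
  apply: ler_sum => m _; rewrite /T big_split /= mulr2n mulrDl mul1r.
  by apply: lerD; apply: blk_sum.
rewrite sumr_const card_ord -mulr_natl.
by rewrite le_eqVlt; apply/orP; left; apply/eqP; ring.
Qed.

End Num2.

Section WLLN.
Variables (R : realType) (mu : nat -> R).
Hypothesis hmu : offspring_dist mu.
Hypothesis hcrit : critical mu.

Lemma bernoulli_ineq (s : R) n : 0 <= s -> s <= 1 -> 1 - n%:R * (1 - s) <= s ^+ n.
Proof.
move=> s0 s1; elim: n => [|n IH]; first by rewrite mul0r subr0 expr0.
rewrite exprS; apply: le_trans (_ : s * (1 - n%:R * (1 - s)) <= _); last first.
  by rewrite ler_wpM2l.
have : 0 <= n%:R * (1 - s) ^+ 2 by rewrite mulr_ge0 ?sqr_ge0.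
move=> h; rewrite -subr_ge0; apply: le_trans h _; rewrite le_eqVlt; apply/orP; left.
by apply/eqP; rewrite -natr1; ring.
Qed.

Lemma B_bound (L n : nat) : (L <= n)%N ->
  \sum_(0 <= k < n) mu k * (k%:R - 1) ^+ 2 <= 1 + L%:R + n%:R * (1 - pm mu L).
Proof.
move=> hLn.
apply: le_trans (_ : \sum_(0 <= k < n) (mu k + k%:R * (k%:R * mu k)) <= _).
  apply: ler_sum_nat => k _.
  have m0 := mu_ge0 hmu k.
  have : mu k * (k%:R - 1) ^+ 2 + 2 * (k%:R * mu k) = mu k + k%:R * (k%:R * mu k) by ring.
  move=> <-; rewrite lerDl mulr_ge0 // mulr_ge0 //.
rewrite big_split /= -/(ps mu n) (big_cat_nat (leq0n L) hLn) /=.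
have h1 : \sum_(0 <= k < L) k%:R * (k%:R * mu k) <= L%:R * pm mu L.
  rewrite /pm mulr_sumr; apply: ler_sum_nat => k /andP[_ hk].
  rewrite ler_wpM2r ?mulr_ge0 ?(mu_ge0 hmu) // ler_nat; exact: ltnW.
have h2 : \sum_(L <= k < n) k%:R * (k%:R * mu k) <= n%:R * (pm mu n - pm mu L).
  rewrite (pm_split _ hLn) [pm mu L + _]addrC addrK mulr_sumr.
  apply: ler_sum_nat => k /andP[_ hk].
  rewrite ler_wpM2r ?mulr_ge0 ?(mu_ge0 hmu) // ler_nat; exact: ltnW.
have h3 := ps_le1 hmu n.
have h4 := pm_le1 hmu hcrit n.
have h5 : L%:R * pm mu L <= L%:R.
  by rewrite -[X in _ <= X]mulr1 ler_wpM2l ?(pm_le1 hmu hcrit).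
have h6 : n%:R * (pm mu n - pm mu L) <= n%:R * (1 - pm mu L).
  by rewrite ler_wpM2l // lerD2r.
lra.
Qed.

End WLLN.

Section WLLN2.
Variables (R : realType) (mu : nat -> R).
Hypothesis hmu : offspring_dist mu.
Hypothesis hcrit : critical mu.

Definition Ysum n (y : n.-tuple 'I_n) : nat := \sum_(i < n) (tnth y i : nat).

Lemma total_mass n : \sum_(y : n.-tuple 'I_n) \prod_(i < n) mu (tnth y i) = ps mu n ^+ n.
Proof.
rewrite (sum_tuple_prod (fun (_ : 'I_n) (k : 'I_n) => mu k)) prodr_const card_ord.
by rewrite /ps big_mkord.
Qed.

Lemma wlln (p : nat) : (0 < p)%N -> exists n0, forall n, (n0 <= n)%N -> forall w, (n %/ p <= w)%N ->
  1/2 <= \sum_(y : n.-tuple 'I_n | (n - w <= Ysum y)%N && (Ysum y <= n + w)%N)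
           \prod_(i < n) mu (tnth y i).
Proof.
move=> p0.
set P : R := p%:R.
have P0 : 0 < P by rewrite ltr0n.
have c10 : 0 < 1 / (48 * P ^+ 2) by rewrite divr_gt0 // mulr_gt0 // exprn_gt0.
have [L HL] := pm_ev hcrit c10.
have d0 : 0 < 1 / (16 * P) by rewrite divr_gt0 // mulr_gt0.
have [N2 HN2] := pm_ev hcrit d0.
have [N3 HN3] := ps_ev hmu d0.
exists (maxn (maxn L N2) (maxn N3 (48 * p * p * L.+1 + 2 * p))) => n hn w hw.
have hLn : (L <= n)%N by move: hn; rewrite !geq_max => /andP[/andP[]].
have hN2 : (N2 <= n)%N by move: hn; rewrite !geq_max => /andP[/andP[]].
have hN3 : (N3 <= n)%N by move: hn; rewrite !geq_max => /andP[_ /andP[]].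
have hbig : (48 * p * p * L.+1 + 2 * p <= n)%N by move: hn; rewrite !geq_max => /andP[_ /andP[]].
set W := fun y : n.-tuple 'I_n => \prod_(i < n) mu (tnth y i).
have W0 : forall y, 0 <= W y by move=> y; apply: prodr_ge0 => i _; exact: (mu_ge0 hmu _).
set good := fun y : n.-tuple 'I_n => (n - w <= Ysum y)%N && (Ysum y <= n + w)%N.
have tot := total_mass n.
rewrite (bigID good predT) /= in tot.
set G := \sum_(y | good y) _ in tot.
set Bd := \sum_(y | ~~ good y) _ in tot.
set nn : R := n%:R.
set v : R := (n %/ p)%:R.
have v0 : 0 < v by rewrite ltr0n divn_gt0 //; lia.
have F1 : nn <= v * P + P.
  rewrite /nn /v /P -natrM -natrD ler_nat; have := ltn_ceil n p0; rewrite mulSn; lia.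
have F2 : 2 * P <= nn.
  rewrite /P /nn -natrM ler_nat; lia.
have F3 : nn ^+ 2 <= 4 * (v ^+ 2 * P ^+ 2).
  have h : nn <= 2 * (v * P) by lra.
  have nn0 : 0 <= nn by [].
  have : nn * nn <= (2 * (v * P)) * (2 * (v * P)) by apply: ler_pM.
  rewrite -!expr2 => h3; apply: le_trans h3 _; rewrite le_eqVlt; apply/orP; left; apply/eqP; ring.
set S := fun y : n.-tuple 'I_n => \sum_(i < n) ((tnth y i : nat)%:R - 1 : R).
have hS : forall y, ~~ good y -> v ^+ 2 <= S y ^+ 2.
  move=> y hy.
  have eS : S y = (Ysum y)%:R - nn.
    by rewrite /S sumrB sumr_const card_ord /Ysum natr_sum.
  rewrite eS; move: hy; rewrite /good negb_and -!ltnNge => /orP[] h.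
    have : v <= nn - (Ysum y)%:R.
      rewrite lerBrDr /v /nn -natrD ler_nat.
      have : (n %/ p <= n)%N by apply: leq_div.
      lia.
    move=> h2; have v0' : 0 <= v by apply: ltW.
    have : v * v <= (nn - (Ysum y)%:R) * (nn - (Ysum y)%:R) by apply: ler_pM.
    rewrite -!expr2 => h3; apply: le_trans h3 _; rewrite le_eqVlt; apply/orP; left; apply/eqP; ring.
  have : v <= (Ysum y)%:R - nn.
    by rewrite lerBrDr /v /nn -natrD ler_nat; lia.
  move=> h2; have v0' : 0 <= v by apply: ltW.
  have : v * v <= ((Ysum y)%:R - nn) * ((Ysum y)%:R - nn) by apply: ler_pM.
  by rewrite -!expr2.
have hB1 : Bd <= (\sum_y W y * S y ^+ 2) / v ^+ 2.
  rewrite mulr_suml [X in _ <= X](bigID good predT) /= -[Bd]add0r; apply: lerD.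
    apply: sumr_ge0 => y _; apply: mulr_ge0; [apply: mulr_ge0; [exact: W0 | exact: sqr_ge0] | by rewrite invr_ge0 sqr_ge0].
  apply: ler_sum => y hy; rewrite -mulrA -[X in X <= _]mulr1; apply: ler_wpM2l; first exact: W0.
  by rewrite ler_pdivlMr ?exprn_gt0 // mul1r hS.
have hSM := @second_moment R n n (fun k : 'I_n => mu k) (fun k : 'I_n => (k : nat)%:R - 1)
   (fun k => mu_ge0 hmu k).
have hps1 : \sum_(k < n) mu k <= 1 by have := ps_le1 hmu n; rewrite /ps big_mkord.
move: (hSM hps1) => {hSM} hSM.
have eB : \sum_(k < n) mu k * ((k : nat)%:R - 1) ^+ 2 = \sum_(0 <= k < n) mu k * (k%:R - 1) ^+ 2.
  by rewrite big_mkord.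
have eC : \sum_(k < n) mu k * ((k : nat)%:R - 1) = pm mu n - ps mu n.
  rewrite /pm /ps -sumrB big_mkord; apply: eq_bigr => k _; ring.
rewrite eB eC in hSM.
have hBb := B_bound hmu hcrit hLn.
set Bs := \sum_(0 <= k < n) _ in hSM hBb.
set Cs := pm mu n - ps mu n in hSM.
have hL1 := HL L (leqnn L).
have hC : Cs ^+ 2 <= 1 / (48 * P ^+ 2).
  have a1 := HN2 n hN2; have a2 := HN3 n hN3.
  have a3 := ps_le1 hmu n; have a4 := pm_le1 hmu hcrit n.
  have hc : `|Cs| <= 2 / (16 * P).
    rewrite ler_norml /Cs; apply/andP; split.
      suff : - (2 / (16 * P)) = - (1 / (16 * P)) - 1 / (16 * P) by move=> ->; lra.
      by field; rewrite pnatr_eq0 -lt0n.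
    suff : (2 / (16 * P)) = (1 / (16 * P)) + 1 / (16 * P) by move=> ->; lra.
    by field; rewrite pnatr_eq0 -lt0n.
  have : Cs ^+ 2 <= (2 / (16 * P)) ^+ 2.
    rewrite -real_normK ?num_real //; apply: ler_pM => //.
  move=> h; apply: le_trans h _.
  have -> : (2 / (16 * P)) ^+ 2 = 1 / (64 * P ^+ 2).
    by field; rewrite pnatr_eq0 -lt0n.
  have -> : 1 / (48 * P ^+ 2) = 1 / (64 * P ^+ 2) + 1 / (192 * P ^+ 2).
    by field; rewrite pnatr_eq0 -lt0n.
  by rewrite lerDl divr_ge0 // mulr_ge0 // sqr_ge0.
have hSM' : \sum_y W y * S y ^+ 2 <= nn * Bs + nn ^+ 2 * Cs ^+ 2 := hSM.
have K0 : 0 < P ^+ 2 by rewrite exprn_gt0.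
have nn0 : 0 <= nn by [].
have hbig' : 48 * (P ^+ 2) * (1 + L%:R) <= nn.
  have : ((48 * p * p * L.+1)%N%:R : R) <= nn by rewrite /nn ler_nat; apply: leq_trans hbig; exact: leq_addr.
  move=> h; apply: le_trans h; rewrite !natrM -natr1 /P le_eqVlt; apply/orP; left; apply/eqP; ring.
have h_a : 16 * (P ^+ 2) * (nn * (1 + L%:R)) <= nn ^+ 2 / 3.
  have -> : 16 * (P ^+ 2) * (nn * (1 + L%:R)) = (nn / 3) * (48 * (P ^+ 2) * (1 + L%:R)) by field.
  have -> : nn ^+ 2 / 3 = (nn / 3) * nn by rewrite expr2; field.
  by apply: ler_wpM2l => //; rewrite divr_ge0.
have h_b : 16 * (P ^+ 2) * (nn ^+ 2 * (1 - pm mu L)) <= nn ^+ 2 / 3.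
  have ht : 48 * (P ^+ 2) * (1 - pm mu L) <= 1.
    rewrite mulrC -ler_pdivlMr ?mulr_gt0 //; lra.
  have -> : 16 * (P ^+ 2) * (nn ^+ 2 * (1 - pm mu L)) = (nn ^+ 2 / 3) * (48 * (P ^+ 2) * (1 - pm mu L)) by field.
  by rewrite -[X in _ <= X]mulr1; apply: ler_wpM2l => //; rewrite divr_ge0 // sqr_ge0.
have h_c : 16 * (P ^+ 2) * (nn ^+ 2 * Cs ^+ 2) <= nn ^+ 2 / 3.
  have ht : 48 * (P ^+ 2) * Cs ^+ 2 <= 1.
    by rewrite mulrC -ler_pdivlMr ?mulr_gt0.
  have -> : 16 * (P ^+ 2) * (nn ^+ 2 * Cs ^+ 2) = (nn ^+ 2 / 3) * (48 * (P ^+ 2) * Cs ^+ 2) by field.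
  by rewrite -[X in _ <= X]mulr1; apply: ler_wpM2l => //; rewrite divr_ge0 // sqr_ge0.
have hX : 4 * (nn * Bs + nn ^+ 2 * Cs ^+ 2) <= v ^+ 2.
  have h1 : nn * Bs <= nn * (1 + L%:R) + nn ^+ 2 * (1 - pm mu L).
    apply: le_trans (_ : nn * (1 + L%:R + nn * (1 - pm mu L)) <= _).
      by apply: ler_wpM2l.
    by rewrite le_eqVlt; apply/orP; left; apply/eqP; ring.
  have h2 : 16 * (P ^+ 2) * (nn * Bs + nn ^+ 2 * Cs ^+ 2) <= nn ^+ 2.
    apply: le_trans (_ : 16 * (P ^+ 2) * (nn * (1 + L%:R) + nn ^+ 2 * (1 - pm mu L) + nn ^+ 2 * Cs ^+ 2) <= _).
      by apply: ler_wpM2l; [rewrite mulr_ge0 // ltW | rewrite lerD2r].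
    have -> : 16 * (P ^+ 2) * (nn * (1 + L%:R) + nn ^+ 2 * (1 - pm mu L) + nn ^+ 2 * Cs ^+ 2)
       = 16 * (P ^+ 2) * (nn * (1 + L%:R)) + 16 * (P ^+ 2) * (nn ^+ 2 * (1 - pm mu L)) + 16 * (P ^+ 2) * (nn ^+ 2 * Cs ^+ 2)
      by ring.
    lra.
  have h3 : 16 * (P ^+ 2) * (nn * Bs + nn ^+ 2 * Cs ^+ 2) <= 4 * (P ^+ 2) * v ^+ 2.
    apply: le_trans h2 _; apply: le_trans F3 _.
    by rewrite le_eqVlt; apply/orP; left; apply/eqP; ring.
  have h4 : 0 < 4 * (P ^+ 2) by rewrite mulr_gt0.
  have h5 : (4 * P ^+ 2) * (4 * (nn * Bs + nn ^+ 2 * Cs ^+ 2)) <= (4 * P ^+ 2) * v ^+ 2.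
    have -> : (4 * P ^+ 2) * (4 * (nn * Bs + nn ^+ 2 * Cs ^+ 2))
      = 16 * (P ^+ 2) * (nn * Bs + nn ^+ 2 * Cs ^+ 2) by ring.
    exact: h3.
  by rewrite ler_pM2l in h5.
have hBd : Bd <= 1 / 4.
  apply: le_trans hB1 _; rewrite ler_pdivrMr ?exprn_gt0 //.
  apply: le_trans hSM' _.
  have : (nn * Bs + nn ^+ 2 * Cs ^+ 2) <= v ^+ 2 / 4 by rewrite ler_pdivlMr // mulrC.
  by move=> h; apply: le_trans h _; rewrite le_eqVlt; apply/orP; left; apply/eqP; field.
have hT : 3 / 4 <= ps mu n ^+ n.
  apply: le_trans (bernoulli_ineq n (ps_ge0 hmu n) (ps_le1 hmu n)).
  have := tail_mass hmu hcrit n; have := HN2 n hN2.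
  have hd : 1 / (16 * P) <= 1 / 4.
    rewrite ler_pdivrMr ?mulr_gt0 //.
    have : 1 <= P by rewrite /P ler1n.
    lra.
  rewrite -/nn; lra.
have hG : G = ps mu n ^+ n - Bd by rewrite -tot addrK.
have : 1 / 2 <= G by rewrite hG; lra.
by [].
Qed.

End WLLN2.

Section Semi.
Variables (R : realType) (mu : nat -> R).

Definition supp (k : nat) : bool := 0 < mu k.
Definition Tset (t : nat) : Prop := exists s : seq nat, all supp s /\ sumn s = t.
Definition Dset (x : nat) : Prop := exists a b, [/\ Tset a, Tset b & a = b + x]%N.

Lemma Tset0 : Tset 0. Proof. by exists [::]. Qed.

Lemma Tset_add a b : Tset a -> Tset b -> Tset (a + b).
Proof.
by move=> [s [hs <-]] [t [ht <-]]; exists (s ++ t); rewrite all_cat hs ht sumn_cat.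
Qed.

Lemma Tset_mul q a : Tset a -> Tset (q * a).
Proof.
move=> ha; elim: q => [|q IH]; first by rewrite mul0n; exact: Tset0.
by rewrite mulSn; apply: Tset_add.
Qed.

Lemma gcd_exists (k : nat) : (0 < k)%N -> Tset k ->
  exists e, [/\ (0 < e)%N, Dset e & forall t, Tset t -> (e %| t)%N].
Proof.
move=> k0 hk.
have hP : exists x, `[< (0 < x)%N /\ Dset x >].
  exists k; apply/asboolP; split => //; exists k, 0%N; split => //; exact: Tset0.
case: (ex_minnP hP) => e /asboolP [e0 hDe] hmin.
exists e; split => // t ht.
case: hDe => a0 [b0 [ha0 hb0 hab]].
set q := (t %/ e)%N; set r := (t %% e)%N.
have hr : Dset r.
  exists (t + q * b0)%N, (q * a0)%N; split.
  - by apply: Tset_add => //; apply: Tset_mul.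
  - exact: Tset_mul.
  - rewrite hab mulnDr {1}(divn_eq t e) -/q -/r; lia.
have : ~~ (0 < r)%N.
  apply/negP => hr0.
  have : (e <= r)%N by apply: hmin; apply/asboolP; split.
  by rewrite leqNgt ltn_pmod.
by rewrite lt0n negbK.
Qed.

Lemma le_sumn (s : seq nat) v : v \in s -> (v <= sumn s)%N.
Proof.
elim: s => // x s IH; rewrite inE => /orP[/eqP ->|/IH h] /=; first exact: leq_addr.
by apply: leq_trans h _; apply: leq_addl.
Qed.

Lemma flatten_nseq_sum n (s : seq nat) : sumn (flatten (nseq n s)) = (n * sumn s)%N.
Proof. by elim: n => [|n IH] //=; rewrite sumn_cat IH mulSn. Qed.

Lemma flatten_nseq_size n (s : seq nat) : size (flatten (nseq n s)) = (n * size s)%N.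
Proof. by elim: n => [|n IH] //=; rewrite size_cat IH mulSn. Qed.

Lemma flatten_nseq_all (P : pred nat) n (s : seq nat) : all P s -> all P (flatten (nseq n s)).
Proof. by move=> h; elim: n => [|n IH] //=; rewrite all_cat h IH. Qed.

Lemma all_supp_le (s : seq nat) K : all supp s -> (sumn s <= K)%N ->
  all (fun v => supp v && (v <= K)%N) s.
Proof.
move=> hs hK; apply/allP => v hv; rewrite (allP hs v hv) /=.
by apply: leq_trans hK; apply: le_sumn.
Qed.

Lemma rep_exists (kst e a0 b0 : nat) (sa sb : seq nat) :
  (2 <= kst)%N -> supp kst -> (0 < e)%N -> (e %| kst)%N ->
  all supp sa -> all supp sb -> sumn sa = a0 -> sumn sb = b0 -> a0 = (b0 + e)%N ->
  exists K C F0, forall d, (e %| d)%N -> (F0 <= d)%N ->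
    exists s : seq nat, [/\ all (fun v => supp v && (v <= K)%N) s, sumn s = d &
        (size s <= C + d %/ 2)%N].
Proof.
move=> hk2 hks e0 hek hsa hsb hsa0 hsb0 hab.
set K := (a0 + b0 + kst)%N.
set ms := (kst %/ e)%N.
exists K, (ms * size sa + kst * ms * size sb)%N, (ms * b0 * kst)%N => d hd hF.
set q := (d %/ kst)%N; set r := (d %% kst)%N; set rho := (r %/ e)%N.
have hk0 : (0 < kst)%N by apply: leq_trans hk2.
have her : (e %| r)%N.
  by move: hd; rewrite {1}(divn_eq d kst) dvdn_addr // dvdn_mull.
have hr : r = (rho * e)%N by rewrite /rho divnK.
have hkse : kst = (ms * e)%N by rewrite /ms divnK.
have hrho : (rho < ms)%N.
  have : (r < kst)%N by apply: ltn_pmod.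
  by rewrite hr hkse ltn_pmul2r.
have hq : (ms * b0 <= q)%N.
  have := leq_div2r kst hF; rewrite mulnK //.
have hq' : (rho * b0 <= q)%N.
  by apply: leq_trans hq; rewrite leq_mul2r (ltnW hrho) orbT.
exists (flatten (nseq rho sa) ++ flatten (nseq ((kst - 1) * rho) sb) ++ nseq (q - rho * b0) kst).
split.
- rewrite !all_cat; apply/and3P; split.
  + apply: flatten_nseq_all; apply: all_supp_le => //; rewrite hsa0 /K -addnA; exact: leq_addr.
  + apply: flatten_nseq_all; apply: all_supp_le => //; rewrite hsb0 /K.
    by rewrite -addnA [(b0 + _)%N]addnC addnA leq_addl.
  + by rewrite all_nseq hks /K leq_addl orbT.
- rewrite !sumn_cat !flatten_nseq_sum sumn_nseq hsa0 hsb0 hab {1}(divn_eq d kst) -/q -/r hr.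
  have hqq : q = ((q - rho * b0) + rho * b0)%N by rewrite subnK.
  rewrite [in RHS]hqq.
  have hk1 : kst = ((kst - 1) + 1)%N by rewrite subnK // ltnW.
  set k1 := (kst - 1)%N in hk1 *.
  set u := (q - rho * b0)%N.
  rewrite hk1; ring.
- rewrite !size_cat !flatten_nseq_size size_nseq.
  have h1 : (rho * size sa <= ms * size sa)%N by rewrite leq_mul2r (ltnW hrho) orbT.
  have h2 : ((kst - 1) * rho * size sb <= kst * ms * size sb)%N.
    rewrite leq_mul2r; apply/orP; right; apply: leq_mul; [exact: leq_subr | exact: ltnW].
  have h3 : (q - rho * b0 <= d %/ 2)%N.
    apply: leq_trans (leq_subr _ _) _; exact: leq_div2l.
  rewrite addnA; apply: leq_add => //; exact: leq_add.
Qed.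

End Semi.

Section Concat.
Variable R : realType.

Lemma sum_inj_le (I J : finType) (phi : I -> J) (P : pred J) (F : J -> R) :
  injective phi -> (forall j, 0 <= F j) ->
  \sum_(i | P (phi i)) F (phi i) <= \sum_(j | P j) F j.
Proof.
move=> hinj F0.
have -> : \sum_(i | P (phi i)) F (phi i) = \sum_(i in [pred i | P (phi i)]) F (phi i) by [].
rewrite -(big_imset _ (in2W hinj)) /=.
rewrite big_mkcond [X in _ <= X]big_mkcond /=; apply: ler_sum => j _.
case: imsetP => [[i hi ->]|_]; first by rewrite inE in hi; rewrite hi.
by case: (P j).
Qed.

End Concat.

Section Concat2.
Variables (R : realType) (mu : nat -> R).
Hypothesis hmu : offspring_dist mu.

Lemma W_seq p q (x : p.-tuple 'I_q) : \prod_(i < p) mu (tnth x i) = \prod_(v <- x) mu v.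
Proof. by rewrite big_tuple. Qed.

Lemma S_seq p q (x : p.-tuple 'I_q) : \sum_(i < p) (tnth x i : nat) = \sum_(v <- x) (v : nat).
Proof. by rewrite big_tuple. Qed.

Lemma prod_const_seq (s : seq nat) (c : R) : \prod_(v <- s) c = c ^+ size s.
Proof. by elim: s => [|a s IH]; rewrite ?big_nil ?expr0 // big_cons IH exprS. Qed.

Lemma concat_bound n M (c : R) (good : pred (n.-tuple 'I_n)) : 0 <= c ->
  (forall y, good y -> 0 < \prod_(i < n) mu (tnth y i) -> exists s : seq nat,
     [/\ size s = M, (Ysum y + sumn s).+1 = (n + M)%N &
         forall v, v \in s -> (v < n + M)%N /\ c <= mu v]) ->
  c ^+ M * \sum_(y | good y) \prod_(i < n) mu (tnth y i) <= probSn_neg1 mu (n + M) predT.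
Proof.
move=> c0 H.
have hnN : (n <= n + M)%N := leq_addr M n.
pose wid := widen_ord hnN.
pose phi (u : n.-tuple 'I_n * M.-tuple 'I_(n + M)) : (n + M).-tuple 'I_(n + M) :=
  cat_tuple (map_tuple wid u.1) u.2.
have phi_inj : injective phi.
  move=> [y1 z1] [y2 z2] /(congr1 val) /= /eqP.
  rewrite eqseq_cat ?size_map ?size_tuple // => /andP[/eqP h1 /eqP h2].
  have hy : y1 = y2.
    apply: val_inj; apply: (inj_map _ h1) => a b /(congr1 val) /= h; exact: val_inj.
  by rewrite hy; congr pair; apply: val_inj.
pose W p q (x : p.-tuple 'I_q) := \prod_(i < p) mu (tnth x i).
have W0 : forall p q (x : p.-tuple 'I_q), 0 <= W p q x.
  by move=> p q x; apply: prodr_ge0 => i _; exact: (mu_ge0 hmu _).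
have Wphi : forall u, W _ _ (phi u) = W _ _ u.1 * W _ _ u.2.
  by move=> [y z]; rewrite /W !W_seq /phi /= big_cat /= big_map.
have Sphi : forall u, \sum_(i < n + M) (tnth (phi u) i : nat) =
                      (Ysum u.1 + \sum_(i < M) (tnth u.2 i : nat))%N.
  by move=> [y z]; rewrite /Ysum !S_seq /phi /= big_cat /= big_map.
rewrite /probSn_neg1.
set cond := fun x : (n + M).-tuple 'I_(n + M) =>
  ((\sum_(i < n + M) (tnth x i : nat)).+1 == (n + M)%N) && predT x.
apply: le_trans (@sum_inj_le R _ _ phi cond (W _ _) phi_inj (W0 _ _)).
pose G (y : n.-tuple 'I_n) (z : M.-tuple 'I_(n + M)) :=
  if cond (phi (y, z)) then W _ _ y * W _ _ z else 0.
have -> : \sum_(u | cond (phi u)) W _ _ (phi u) = \sum_y \sum_z G y z.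
  rewrite pair_big /= big_mkcond /=; apply: eq_bigr => [[y z]] _.
  by rewrite /G Wphi.
rewrite mulr_sumr big_mkcond /=; apply: ler_sum => y _.
have G0 : forall z, 0 <= G y z by move=> z; rewrite /G; case: ifP => // _; rewrite mulr_ge0.
case: ifP => hg; last by apply: sumr_ge0.
have [Wy0|Wy0] := eqVneq (W _ _ y) 0.
  by move: Wy0; rewrite /W => ->; rewrite mulr0; apply: sumr_ge0.
have Wyp : 0 < W _ _ y by rewrite lt0r Wy0 W0.
have [s [hs hsum hv]] := H y hg Wyp.
have hNp : (0 < n + M)%N by rewrite -hsum.
pose d0 : 'I_(n + M) := Ordinal hNp.
pose f (v : nat) : 'I_(n + M) := insubd d0 v.
have fK : forall v, v \in s -> (f v : nat) = v.
  by move=> v hvs; rewrite /f val_insubd (hv v hvs).1.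
have hsz : size (map f s) == M by rewrite size_map hs.
pose z0 : M.-tuple 'I_(n + M) := Tuple hsz.
apply: le_trans (_ : G y z0 <= _); last first.
  by rewrite (bigD1 z0) //= lerDl; apply: sumr_ge0.
have hz0 : \sum_(i < M) (tnth z0 i : nat) = sumn s.
  rewrite S_seq /= big_map sumnE; apply: eq_big_seq => v hvs; exact: fK.
have hc : cond (phi (y, z0)).
  by rewrite /cond Sphi /= hz0 hsum eqxx.
rewrite /G hc [X in _ <= X]mulrC; apply: ler_wpM2r; first exact: W0.
rewrite /W W_seq /= big_map.
rewrite big_seq.
apply: le_trans (_ : \prod_(v <- s | v \in s) c <= _).
  by rewrite -big_seq prod_const_seq hs.
apply: ler_prod => v hvs; by rewrite c0 fK // (hv v hvs).2.
Qed.

End Concat2.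

Section Witness.
Variables (R : realType) (mu : nat -> R).
Hypothesis hmu : offspring_dist mu.

Lemma witness N : 0 < probSn_neg1 mu N predT ->
  exists x : N.-tuple 'I_N, ((Ysum x).+1 == N) && (0 < \prod_(i < N) mu (tnth x i)).
Proof.
move=> hpos; case: (pselect (exists x : N.-tuple 'I_N,
   ((Ysum x).+1 == N) && (0 < \prod_(i < N) mu (tnth x i)))) => // hno.
exfalso; move: hpos; apply/negP; rewrite -leNgt /probSn_neg1.
apply: sumr_le0 => x /andP[hx _].
have W0 : 0 <= \prod_(i < N) mu (tnth x i) by apply: prodr_ge0 => i _; exact: (mu_ge0 hmu _).
rewrite le_eqVlt; apply/orP; left; apply/eqP.
move: W0; rewrite le_eqVlt => /orP[/eqP <- //|hp].
by exfalso; apply: hno; exists x; rewrite hp andbT.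
Qed.

Lemma size_le_sumn (s : seq nat) : all (fun v => 0 < v)%N s -> (size s <= sumn s)%N.
Proof. by elim: s => //= a s IH /andP[ha hs]; rewrite -add1n leq_add ?IH. Qed.

Lemma witness_T N : 0 < probSn_neg1 mu N predT ->
  [/\ (0 < N)%N, exists s : seq nat, [/\ all (supp mu) s, sumn s = (N - 1)%N & size s = N]
      & supp mu 0].
Proof.
move=> /witness [x /andP[hx hW]].
have hN : (0 < N)%N by rewrite -(eqP hx).
pose s := map (fun v : 'I_N => (v : nat)) x.
have hsum : sumn s = (N - 1)%N.
  by rewrite -(eqP hx) subn1 /= /s sumnE big_map -S_seq.
have hall : all (supp mu) s.
  apply/allP => v /mapP [u hu ->]; rewrite /supp.
  move: hu => /(tnthP x) [i ->].
  have : 0 <= mu (tnth x i) by exact: (mu_ge0 hmu _).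
  rewrite le_eqVlt => /orP[/eqP h0|//].
  by move: hW; rewrite (bigD1 i) //= -h0 mul0r ltxx.
have hsz : size s = N by rewrite size_map size_tuple.
split => //; first by exists s.
case: (boolP (0 \in s)) => h0; first exact: (allP hall 0 h0).
have : all (fun v => 0 < v)%N s.
  by apply/allP => v hv; rewrite lt0n; apply/negP => /eqP hv0; move: h0; rewrite hv0 in hv; rewrite hv.
move/size_le_sumn; rewrite hsz hsum; lia.
Qed.

Lemma pos_all_supp p q (y : p.-tuple 'I_q) : 0 < \prod_(i < p) mu (tnth y i) ->
  all (supp mu) (map (fun v : 'I_q => (v : nat)) y).
Proof.
move=> hW; apply/allP => v /mapP [u hu ->]; rewrite /supp.
move: hu => /(tnthP y) [i ->].
have : 0 <= mu (tnth y i) by exact: (mu_ge0 hmu _).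
rewrite le_eqVlt => /orP[/eqP h0|//].
by move: hW; rewrite (bigD1 i) //= -h0 mul0r ltxx.
Qed.

Lemma sumn_Ysum n (y : n.-tuple 'I_n) : sumn (map (fun v : 'I_n => (v : nat)) y) = Ysum y.
Proof. by rewrite sumnE big_map /Ysum S_seq. Qed.

End Witness.

Section Helpers.
Variables (R : realType) (mu : nat -> R).
Hypothesis hmu : offspring_dist mu.
Hypothesis hcrit : critical mu.

Lemma kstar_exists : supp mu 0 -> exists k, (2 <= k)%N /\ supp mu k.
Proof.
move=> h0; case: (pselect (exists k, (2 <= k)%N /\ supp mu k)) => // hno.
exfalso.
have hz : forall k, (2 <= k)%N -> mu k = 0.
  move=> k hk; have : 0 <= mu k by exact: mu_ge0 hmu k.
  rewrite le_eqVlt => /orP[/eqP <- //|hp]; exfalso; apply: hno; by exists k.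
have hpm : forall n, (2 <= n)%N -> pm mu n = mu 1.
  move=> n hn; rewrite (pm_split _ hn) big1_seq ?addr0; last first.
    by move=> k /andP[_]; rewrite mem_index_iota => /andP[hk _]; rewrite hz // mulr0.
  by rewrite /pm big_ltn // big_nat1 mul0r add0r mul1r.
have h1 : 1 <= mu 1.
  apply/ler_addgt0Pr => e he; have [N HN] := pm_ev hcrit he.
  have := HN (maxn N 2) (leq_maxl _ _); rewrite hpm ?leq_maxr //; lra.
have h2 := ps_le1 hmu 2.
move: h2; rewrite /ps big_ltn // big_nat1 => h2.
move: h0; rewrite /supp => h0; lra.
Qed.

Definition cmin K := \big[Num.min/1]_(k < K.+1 | supp mu k) mu k.

Lemma cmin_gt0 K : 0 < cmin K.
Proof.
rewrite /cmin; apply: (big_ind (fun x => 0 < x)) => //.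
by move=> x y hx hy; rewrite lt_min hx hy.
Qed.

Lemma cmin_le K k : (k <= K)%N -> supp mu k -> cmin K <= mu k.
Proof.
move=> hk hs; have hk' : (k < K.+1)%N by [].
by rewrite /cmin (bigD1 (Ordinal hk')) //= ge_min lexx.
Qed.

Lemma cmin_le1 K : cmin K <= 1.
Proof.
rewrite /cmin; apply: (big_ind (fun x => x <= 1)) => //.
by move=> x y hx hy; rewrite ge_min hx.
move=> i _; apply: (mu_le1 hmu).
Qed.

End Helpers.

Lemma natA (N p n0 C' : nat) : (2 <= p)%N -> (2 * (n0 + C') <= N)%N ->
  (N %/ p + C' <= N)%N /\ (n0 <= N - (N %/ p + C'))%N.
Proof.
move=> hp hN; have : (N %/ p <= N %/ 2)%N by apply: leq_div2l.
lia.
Qed.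

Lemma natB (N n w C F0 Y : nat) : N = (n + (w + (2 * C + F0 + 1)))%N -> (Y <= n + w)%N ->
  (F0 <= N - 1 - Y)%N.
Proof. lia. Qed.

Lemma natC (N n w C F0 Y : nat) : N = (n + (w + (2 * C + F0 + 1)))%N -> (n - w <= Y)%N ->
  (C + (N - 1 - Y) %/ 2 <= w + (2 * C + F0 + 1))%N.
Proof. lia. Qed.

Lemma natD (N n w C' Y D : nat) : N = (n + (w + C'))%N -> (Y <= n + w)%N -> (0 < C')%N ->
  D = (N - 1 - Y)%N -> (Y + D).+1 = N.
Proof. lia. Qed.

Section Den.
Variables (R : realType) (mu : nat -> R).
Hypothesis hmu : offspring_dist mu.
Hypothesis hcrit : critical mu.

Lemma den_bound (eta : R) : 0 < eta -> exists N0, forall N, (N0 <= N)%N ->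
  0 < probSn_neg1 mu N predT -> expR (- (eta * N%:R)) <= probSn_neg1 mu N predT.
Proof.
move=> he.
case: (pselect (exists N, 0 < probSn_neg1 mu N predT)) => [[N1 hN1]|hno]; last first.
  by exists 0%N => N _ hN; exfalso; apply: hno; exists N.
have [_ _ h0] := witness_T hmu hN1.
have [kst [hk2 hks]] := kstar_exists hmu hcrit h0.
have hk0 : (0 < kst)%N by apply: leq_trans hk2.
have hTk : Tset mu kst by exists [:: kst]; rewrite /= hks addn0.
have [e [e0 [a0 [b0 [[sa [hsa hsa0]] [sb [hsb hsb0]] hab]]] hdiv]] := gcd_exists hk0 hTk.
have [K [C [F0 hrep]]] := rep_exists hk2 hks e0 (hdiv _ hTk) hsa hsb hsa0 hsb0 hab.
pose c := cmin mu K.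
have c0 : 0 < c := cmin_gt0 mu K.
have c1 : c <= 1 := cmin_le1 hmu K.
pose lc := - ln c.
have lc0 : 0 <= lc by rewrite /lc oppr_ge0 ln_le0.
pose p := (Num.Def.trunc (2 * lc / eta)).+2.
have hp : 2 * lc / eta < p%:R.
  apply: lt_le_trans (truncnS_gt _) _; rewrite ler_nat; exact: leqnSn.
have hp2 : (2 <= p)%N by [].
have hp0 : (0 < p)%N by [].
have [n0 Hn0] := wlln hmu hcrit hp0.
pose C' := (2 * C + F0 + 1)%N.
pose q := c ^+ C' * (1 / 2).
have q0 : 0 < q by rewrite /q mulr_gt0 // exprn_gt0.
pose N3 := (Num.Def.trunc (2 / (eta * q))).+1.
have hN3 : 2 / (eta * q) < N3%:R by apply: truncnS_gt.
exists (maxn (2 * (n0 + C')) (maxn K.+1 N3)) => N hN hpos.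
have hNa : (2 * (n0 + C') <= N)%N by move: hN; rewrite !geq_max => /andP[].
have hNb : (K < N)%N by move: hN; rewrite !geq_max => /andP[_ /andP[]].
have hNc : (N3 <= N)%N by move: hN; rewrite !geq_max => /andP[_ /andP[]].
have [hN0 [sN [hsN hsumN hszN]] _] := witness_T hmu hpos.
have hTN : Tset mu (N - 1) by exists sN.
have [hMN hn0] := natA hp2 hNa.
have [n hn] : exists n, n = (N - (N %/ p + C'))%N by eexists.
rewrite -hn in hn0.
have hNnM : N = (n + (N %/ p + C'))%N by rewrite hn subnK.
have hwn : (n %/ p <= N %/ p)%N by apply: leq_div2r; rewrite hn leq_subr.
have key : c ^+ (N %/ p + C') * (1 / 2) <= probSn_neg1 mu N predT.
  pose good := fun y : n.-tuple 'I_n => (n - N %/ p <= Ysum y)%N && (Ysum y <= n + N %/ p)%N.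
  have hcb := @concat_bound R mu hmu n (N %/ p + C') c good (ltW c0).
  have hc : c ^+ (N %/ p + C') * \sum_(y | good y) \prod_(i < n) mu (tnth y i)
       <= probSn_neg1 mu (n + (N %/ p + C')) predT.
    apply: hcb => y hg hWy.
    have hTY : Tset mu (Ysum y).
      by exists (map (fun v : 'I_n => (v : nat)) y); rewrite pos_all_supp // sumn_Ysum.
    move: hg => /andP[hg1 hg2].
    have hdD : (e %| N - 1 - Ysum y)%N by apply: dvdn_sub; apply: hdiv.
    have hFD : (F0 <= N - 1 - Ysum y)%N := natB hNnM hg2.
    have [s0 [hs0 hsum0 hsz0]] := hrep _ hdD hFD.
    have hszM : (size s0 <= N %/ p + C')%N := leq_trans hsz0 (natC hNnM hg1).
    exists (s0 ++ nseq (N %/ p + C' - size s0) 0%N); split.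
    - by rewrite size_cat size_nseq subnKC.
    - rewrite sumn_cat sumn_nseq mul0n addn0 hsum0 -hNnM.
      by apply: (natD hNnM hg2) => //; rewrite /C' addn1.
    - move=> v; rewrite mem_cat => /orP[hv|].
        move: (allP hs0 v hv) => /andP[hsv hvK]; split.
          by rewrite -hNnM; apply: leq_ltn_trans hNb.
        exact: cmin_le.
      move=> /nseqP [-> _]; split; first by rewrite -hNnM.
      exact: cmin_le.
  rewrite -hNnM in hc; apply: le_trans hc; apply: ler_wpM2l; first by rewrite exprn_ge0 // ltW.
  exact: Hn0.
apply: le_trans key.
rewrite exprD -mulrA -/q.
have hx0 : 0 <= eta / 2 * N%:R by rewrite mulr_ge0 // divr_ge0 // ltW.
have h1 : expR (- (eta / 2 * N%:R)) <= c ^+ (N %/ p).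
  have hc : c = expR (ln c) by rewrite lnK // posrE.
  rewrite [X in _ <= X ^+ _]hc -expRM_natl ler_expR.
  have hwp : (N %/ p)%:R * p%:R <= N%:R :> R by rewrite -natrM ler_nat leq_trunc_div.
  have hlc : lc <= p%:R * eta / 2.
    move: hp; rewrite ltr_pdivrMr // => h.
    rewrite ler_pdivlMr //; lra.
  have hw0 : 0 <= (N %/ p)%:R :> R by [].
  have : (N %/ p)%:R * lc <= (N %/ p)%:R * (p%:R * eta / 2) by apply: ler_wpM2l.
  have -> : (N %/ p)%:R * (p%:R * eta / 2) = ((N %/ p)%:R * p%:R) * (eta / 2) by ring.
  move=> h; have h' : (N %/ p)%:R * lc <= N%:R * (eta / 2).
    apply: le_trans h _; apply: ler_wpM2r => //.
    by rewrite divr_ge0 // ltW.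
  rewrite /lc in h'; lra.
have h2 : expR (- (eta / 2 * N%:R)) <= q.
  have hN3' : 2 / (eta * q) <= N%:R.
    by apply: le_trans (ltW hN3) _; rewrite ler_nat.
  have hx1 : 1 <= q * (eta / 2 * N%:R).
    move: hN3'; rewrite ler_pdivrMr; last exact: mulr_gt0 he q0.
    move=> h.
    have -> : q * (eta / 2 * N%:R) = N%:R * (eta * q) / 2 by ring.
    by rewrite ler_pdivlMr //; lra.
  have hex : q * (eta / 2 * N%:R) <= q * expR (eta / 2 * N%:R).
    apply: ler_wpM2l; first exact: ltW.
    by apply: le_trans (expR_ge1Dx _); rewrite lerDr.
  have hE : expR (- (eta / 2 * N%:R)) * expR (eta / 2 * N%:R) = 1.
    by rewrite -expRD addNr expR0.
  have hE0 : 0 < expR (eta / 2 * N%:R) := expR_gt0 _.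
  rewrite -(ler_pM2r hE0) hE; apply: le_trans hex; rewrite mulrC; lra.
have -> : - (eta * N%:R) = - (eta / 2 * N%:R) + - (eta / 2 * N%:R).
  by field.
rewrite expRD; apply: ler_pM; [exact: expR_ge0 | exact: expR_ge0 | exact: h1 | exact: h2].
Qed.

End Den.

Lemma exp_beats_lin (R : realType) (d : R) : 0 < d ->
  exists N3, forall n, (N3 <= n)%N -> 2 * n.+1%:R <= expR (d * n%:R).
Proof.
move=> d0.
exists (Num.Def.trunc (16 / d ^+ 2)).+1 => n hn.
have hn1 : (1 <= n)%N by apply: leq_trans hn.
have hnr : 16 / d ^+ 2 <= n%:R.
  apply: le_trans (ltW (truncnS_gt _)) _; by rewrite ler_nat.
have hx : 0 <= d * n%:R / 2 by rewrite divr_ge0 // mulr_ge0 // ltW.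
have hE : d * n%:R / 2 <= expR (d * n%:R / 2).
  by apply: le_trans (expR_ge1Dx _); rewrite lerDr.
have -> : d * n%:R = d * n%:R / 2 + d * n%:R / 2.
  by rewrite -splitr.
rewrite expRD.
apply: le_trans (_ : (d * n%:R / 2) * (d * n%:R / 2) <= _); last by apply: ler_pM.
have h16 : 16 <= n%:R * d ^+ 2 by rewrite -ler_pdivrMr // exprn_gt0.
have hn1r : (1 : R) <= n%:R by rewrite ler1n.
have -> : d * n%:R / 2 * (d * n%:R / 2) = n%:R * (n%:R * d ^+ 2) / 4 by field.
rewrite ler_pdivlMr //.
have h : n%:R * 16 <= n%:R * (n%:R * d ^+ 2) by apply: ler_wpM2l.
apply: le_trans h; rewrite -natr1; lra.
Qed.

Unset Implicit Arguments.
Set Strict Implicit.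

Theorem mainTheorem14 (R : realType) (mu : nat -> R)
  (hmu : offspring_dist mu) (hcrit : critical mu) (eps : R) (heps : 0 < eps) :
  exists delta : R, 0 < delta /\
    exists N : nat, forall n : nat, (N <= n)%N ->
      0 < probSn_neg1 mu n predT ->
      probSn_neg1 mu n (bigmax_event n eps) / probSn_neg1 mu n predT
        <= expR (- (delta * n%:R)).
Proof.
have he4 : 0 < eps / 4 by rewrite divr_gt0.
have [th [th0 th1 [N1 HN1]]] := mgf_bound hmu hcrit he4.
pose delta := th * (eps / 4).
have hd : 0 < delta by rewrite mulr_gt0.
exists delta; split => //.
have [N2 HN2] := den_bound hmu hcrit hd.
have [N3 HN3] := exp_beats_lin hd.
exists (maxn N1 (maxn N2 N3)) => n hn hpos.
have hn1 : (N1 <= n)%N by move: hn; rewrite !geq_max => /andP[].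
have hn2 : (N2 <= n)%N by move: hn; rewrite !geq_max => /andP[_ /andP[]].
have hn3 : (N3 <= n)%N by move: hn; rewrite !geq_max => /andP[_ /andP[]].
set D := probSn_neg1 mu n predT.
set A := probSn_neg1 mu n (bigmax_event n eps).
pose U := 1 + th * (eps / 4).
have U1 : 1 <= U by rewrite /U lerDl mulr_ge0 // ltW.
have hA := @num_bound R mu hmu n eps th U (ltW th0) U1 (HN1 n hn1).
have hU : U ^+ n <= expR (delta * n%:R).
  rewrite mulrC expRM_natl; apply: lerXn2r; rewrite ?nnegrE ?expR_ge0 //.
    by apply: le_trans U1.
  exact: expR_ge1Dx.
have hD := HN2 n hn2 hpos.
have h2 := HN3 n hn3.
rewrite ler_pdivrMr //.
apply: le_trans (_ : expR (- (delta * n%:R)) * expR (- (delta * n%:R)) <= _); last first.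
  by apply: ler_wpM2l => //; exact: expR_ge0.
apply: le_trans hA _.
have -> : th * (eps * n%:R) = 4 * (delta * n%:R) by rewrite /delta; field.
set x := delta * n%:R.
have e1 : expR (- (4 * x)) * expR x * expR x = expR (- x) * expR (- x).
  by rewrite -!expRD; congr expR; ring.
rewrite -e1 -mulrA [X in _ <= X]mulrC ler_pM //.
- by apply: mulr_ge0; [exact: expR_ge0 | apply: exprn_ge0; apply: le_trans U1].
- by rewrite ler_wpM2l // expR_ge0.
Qed.
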